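(* Let ${\rm PSL}_2(\mathbb Z)$ be presented by generators $\rho,\sigma$ with relations $\rho^3=1$, $\sigma^2=1$. Then ${\rm PSL}_2(\mathbb Z)$ acts on $\Delta$ as a group of automorphisms such that $\rho$ sends $A\mapsto B$, $B\mapsto C$, $C\mapsto A$, $\alpha\mapsto\beta$, $\beta\mapsto\gamma$, $\gamma\mapsto\alpha$, and $\sigma$ sends $A\mapsto B$, $B\mapsto A$, $C\mapsto C+\frac{AB-BA}{q-q^{-1}}$, $\alpha\mapsto\beta$, $\beta\mapsto\alpha$, $\gamma\mapsto\gamma$.
   Context: Let $\mathbb F$ be a field and fix a nonzero $q\in\mathbb F$ with $q^4\neq 1$. Algebras are associative with 1. The universal Askey--Wilson algebra $\Delta$ is the $\mathbb F$-algebra with generators $A,B,C$ subject to the relations that each of $A+\frac{qBC-q^{-1}CB}{q^2-q^{-2}}$, $B+\frac{qCA-q^{-1}AC}{q^2-q^{-2}}$, $C+\frac{qAB-q^{-1}BA}{q^2-q^{-2}}$ is central in $\Delta$. Let $\alpha,\beta,\gamma$ denote these three central elements (in this order) each multiplied by $q+q^{-1}$. *)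

(* Defs.v *)
From HB Require Import structures.
From mathcomp Require Import all_boot all_order all_algebra.
Set Implicit Arguments. Unset Strict Implicit. Unset Printing Implicit Defensive.
Import Order.TTheory GRing.Theory Num.Theory.
Local Open Scope ring_scope.

Section AW.
Variables (F : fieldType) (q : F).

Definition aw_elt (R : algType F) (x y z : R) : R :=
  x + (q ^+ 2 - q^-2)^-1 *: (q *: (y * z) - q^-1 *: (z * y)).

Definition aw_alpha (R : algType F) (a b c : R) : R := (q + q^-1) *: aw_elt a b c.
Definition aw_beta  (R : algType F) (a b c : R) : R := (q + q^-1) *: aw_elt b c a.
Definition aw_gamma (R : algType F) (a b c : R) : R := (q + q^-1) *: aw_elt c a b.

Definition commutes_with_gens (R : algType F) (a b c x : R) : Prop :=
  x * a = a * x /\ x * b = b * x /\ x * c = c * x.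

Definition aw_relations (R : algType F) (a b c : R) : Prop :=
  commutes_with_gens a b c (aw_elt a b c) /\
  commutes_with_gens a b c (aw_elt b c a) /\
  commutes_with_gens a b c (aw_elt c a b).

(* (D, A, B, C) is the universal Askey-Wilson algebra: the F-algebra
   presented by generators A, B, C and the relations above, characterized
   by its universal property. *)
Definition is_universal_AW (D : algType F) (A B C : D) : Prop :=
  aw_relations A B C /\
  forall (R : algType F) (a b c : R), aw_relations a b c ->
    exists f : {lrmorphism D -> R},
      [/\ f A = a, f B = b, f C = c &
        forall g : {lrmorphism D -> R},
          g A = a -> g B = b -> g C = c -> forall x, g x = f x].
End AW.

(* Main.v *)
Require Import Defs.
From HB Require Import structures.
From mathcomp Require Import all_boot all_order all_algebra.
From mathcomp Require Import ring.
Import GRing.Theory.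
Local Open Scope ring_scope.
Set Implicit Arguments. Unset Strict Implicit.
Section LC.
Variables (F : fieldType) (V : lmodType F) (n : nat) (vs : 'I_n -> V).
Definition lc (c : 'rV[F]_n) : V := \sum_i c 0 i *: vs i.
Lemma lcD x y : lc (x + y) = lc x + lc y.
Proof. by rewrite /lc -big_split; apply: eq_bigr => i _; rewrite mxE scalerDl. Qed.
Lemma lcZ a x : lc (a *: x) = a *: lc x.
Proof. by rewrite /lc scaler_sumr; apply: eq_bigr => i _; rewrite mxE scalerA. Qed.
Lemma lcN x : lc (- x) = - lc x.
Proof. by rewrite /lc -sumrN; apply: eq_bigr => i _; rewrite mxE scaleNr. Qed.
Lemma lcB x y : lc (x - y) = lc x - lc y.
Proof. by rewrite lcD lcN. Qed.
Lemma lc0 : lc 0 = 0.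
Proof. by rewrite /lc big1 // => i _; rewrite mxE scale0r. Qed.
Lemma lc_delta i : vs i = lc (delta_mx 0 i).
Proof.
rewrite /lc (bigD1 i) //= big1 ?addr0 => [|j ji]; first by rewrite mxE !eqxx scale1r.
by rewrite mxE eqxx /= (negbTE ji) scale0r.
Qed.
End LC.
Section S.
Variables (F : fieldType) (q : F) (hq0 : q != 0) (h4 : q ^+ 4 != 1).
Lemma hqq2 : (q*q)^+2 - 1 != 0.
Proof. have -> : (q*q)^+2 = q^+4 by ring. by rewrite subr_eq0. Qed.
Lemma hqq1 : q*q - 1 != 0.
Proof. have := hqq2; have -> : (q*q)^+2 - 1 = (q*q-1)*(q*q+1) by ring.
by rewrite mulf_eq0 negb_or => /andP[]. Qed.
Lemma hqq3 : q*q + 1 != 0.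
Proof. have := hqq2; have -> : (q*q)^+2 - 1 = (q*q-1)*(q*q+1) by ring.
by rewrite mulf_eq0 negb_or => /andP[]. Qed.
Ltac side := rewrite ?hq0 ?hqq1 ?hqq2 ?hqq3 //.
Lemma hd : q - q^-1 != 0.
Proof. have -> : q - q^-1 = (q*q - 1) / q by field; side. by rewrite mulf_neq0 ?invr_eq0 ?hqq1. Qed.
Lemma hs : q + q^-1 != 0.
Proof. have -> : q + q^-1 = (q*q + 1) / q by field; side. by rewrite mulf_neq0 ?invr_eq0 ?hqq3. Qed.
Lemma hk : q^+2 - q^-2 != 0.
Proof. have -> : q^+2 - q^-2 = (q - q^-1) * (q + q^-1) by field; side. by rewrite mulf_neq0 ?hd ?hs. Qed.

Variables (D : algType F) (A B C : D).
Lemma id2 : aw_elt q (C + (q - q^-1)^-1 *: (A*B - B*A)) B A = aw_elt q C A B.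
Proof.
rewrite /aw_elt.
pose vs := fun i : 'I_3 => nth 0 [:: C; A*B; B*A] i.
have e0 : C = lc vs (delta_mx 0 (inord 0)) by rewrite -lc_delta /vs inordK.
have e1 : A*B = lc vs (delta_mx 0 (inord 1)) by rewrite -lc_delta /vs inordK.
have e2 : B*A = lc vs (delta_mx 0 (inord 2)) by rewrite -lc_delta /vs inordK.
rewrite e1 e2 e0.
rewrite -?lcZ -?lcB -?lcD -?lcZ -?lcB -?lcD -?lcZ -?lcB -?lcD.
congr lc; apply/rowP => j; rewrite !mxE.
case: j => [[|[|[|m]]] Hj] /=; rewrite ?inordK //=; field; side.
Qed.
Ltac fold_lc := do 6 rewrite -?lcZ -?lcB -?lcD -?lcN.
Ltac expand := do 3 rewrite ?mulrDl ?mulrDr ?mulrBl ?mulrBr ?mulNr ?mulrN -?scalerAl -?scalerAr ?mulrA.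
Lemma id1 (hG : aw_elt q C A B * B = B * aw_elt q C A B) :
  aw_elt q A (C + (q - q^-1)^-1 *: (A*B - B*A)) B = aw_elt q A B C.
Proof.
move: hG; rewrite /aw_elt; expand.
pose vs := fun i : 'I_6 => nth 0 [:: A; C*B; B*C; A*B*B; B*A*B; B*B*A] i.
have e0 : A = lc vs (delta_mx 0 (inord 0)) by rewrite -lc_delta /vs inordK.
have e1 : C*B = lc vs (delta_mx 0 (inord 1)) by rewrite -lc_delta /vs inordK.
have e2 : B*C = lc vs (delta_mx 0 (inord 2)) by rewrite -lc_delta /vs inordK.
have e3 : A*B*B = lc vs (delta_mx 0 (inord 3)) by rewrite -lc_delta /vs inordK.
have e4 : B*A*B = lc vs (delta_mx 0 (inord 4)) by rewrite -lc_delta /vs inordK.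
have e5 : B*B*A = lc vs (delta_mx 0 (inord 5)) by rewrite -lc_delta /vs inordK.
rewrite e3 e4 e5 e1 e2 e0; fold_lc.
move=> /eqP; rewrite -subr_eq0 -lcB => /eqP hr.
apply/eqP; rewrite -subr_eq0 -lcB; apply/eqP.
match goal with |- lc _ ?g = 0 => match type of hr with lc _ ?r = 0 =>
  have -> : g = (q - q^-1)^-1 *: r end end.
  apply/rowP => j; rewrite !mxE.
  case: j => [[|[|[|[|[|[|m]]]]]] Hj] /=; rewrite ?inordK //=; field; side.
by rewrite lcZ hr scaler0.
Qed.
Lemma id3 (hG : aw_elt q C A B * A = A * aw_elt q C A B) :
  aw_elt q B A (C + (q - q^-1)^-1 *: (A*B - B*A)) = aw_elt q B C A.
Proof.
move: hG; rewrite /aw_elt; expand.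
pose vs := fun i : 'I_6 => nth 0 [:: B; A*C; C*A; A*A*B; A*B*A; B*A*A] i.
have e0 : B = lc vs (delta_mx 0 (inord 0)) by rewrite -lc_delta /vs inordK.
have e1 : A*C = lc vs (delta_mx 0 (inord 1)) by rewrite -lc_delta /vs inordK.
have e2 : C*A = lc vs (delta_mx 0 (inord 2)) by rewrite -lc_delta /vs inordK.
have e3 : A*A*B = lc vs (delta_mx 0 (inord 3)) by rewrite -lc_delta /vs inordK.
have e4 : A*B*A = lc vs (delta_mx 0 (inord 4)) by rewrite -lc_delta /vs inordK.
have e5 : B*A*A = lc vs (delta_mx 0 (inord 5)) by rewrite -lc_delta /vs inordK.
rewrite e3 e4 e5 e1 e2 e0; fold_lc.
move=> /eqP; rewrite -subr_eq0 -lcB => /eqP hr.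
apply/eqP; rewrite -subr_eq0 -lcB; apply/eqP.
match goal with |- lc _ ?g = 0 => match type of hr with lc _ ?r = 0 =>
  have -> : g = - (q - q^-1)^-1 *: r end end.
  apply/rowP => j; rewrite !mxE.
  case: j => [[|[|[|[|[|[|m]]]]]] Hj] /=; rewrite ?inordK //=; field; side.
by rewrite lcZ hr scaler0.
Qed.

Lemma comm_C' (x : D) (k : F) : x * A = A * x -> x * B = B * x -> x * C = C * x ->
  x * (C + k *: (A*B - B*A)) = (C + k *: (A*B - B*A)) * x.
Proof.
move=> hA hB hC.
rewrite mulrDr mulrDl -scalerAr -scalerAl mulrBr mulrBl !mulrA hC.
by rewrite hA -(mulrA A) hB mulrA -(mulrA B x) hA !mulrA.
Qed.
End S.
Theorem theorem3p1 (F : fieldType) (q : F) (hq0 : q != 0) (hq4 : q ^+ 4 != 1)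
    (D : algType F) (A B C : D) (hD : is_universal_AW q A B C) :
  exists rho sigma : {lrmorphism D -> D},
    [/\ bijective rho, bijective sigma,
        (forall x, rho (rho (rho x)) = x) &
        (forall x, sigma (sigma x) = x)] /\
    [/\ rho A = B, rho B = C & rho C = A] /\
    [/\ rho (aw_alpha q A B C) = aw_beta q A B C,
        rho (aw_beta q A B C) = aw_gamma q A B C &
        rho (aw_gamma q A B C) = aw_alpha q A B C] /\
    [/\ sigma A = B, sigma B = A &
        sigma C = C + (q - q^-1)^-1 *: (A * B - B * A)] /\
    [/\ sigma (aw_alpha q A B C) = aw_beta q A B C,
        sigma (aw_beta q A B C) = aw_alpha q A B C &
        sigma (aw_gamma q A B C) = aw_gamma q A B C].

Proof.
case: hD => hrel huniv.
have hd' := hd hq0 hq4.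
have hS (f : {lrmorphism D -> D}) (x y z : D) :
  f (aw_elt q x y z) = aw_elt q (f x) (f y) (f z).
  have fZ : forall (k : F) v, f (k *: v) = k *: f v by move=> k v; exact: linearZ.
  have fD : forall v w, f (v + w) = f v + f w by move=> v w; exact: rmorphD.
  have fB : forall v w, f (v - w) = f v - f w by move=> v w; exact: rmorphB.
  have fM : forall v w, f (v * w) = f v * f w by move=> v w; exact: rmorphM.
  by rewrite /aw_elt fD fZ fB !fZ !fM.
have hSa (f : {lrmorphism D -> D}) (k : F) (x : D) : f (k *: x) = k *: f x.
  exact: linearZ.
case: (hrel) => [[a1 [a2 a3]] [[b1 [b2 b3]] [c1 [c2 c3]]]].
have [f0 [f0A f0B f0C f0u]] := huniv D A B C hrel.
have uid (g : {lrmorphism D -> D}) : g A = A -> g B = B -> g C = C -> forall x, g x = x.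
  move=> gA gB gC x; rewrite (f0u g gA gB gC x).
  by rewrite -(f0u idfun) //.
have rrel : aw_relations q B C A by split; [|split]; split=> //; split.
have [rho [rA rB rC _]] := huniv D B C A rrel.
set C' := C + (q - q^-1)^-1 *: (A*B - B*A).
have e1 : aw_elt q A C' B = aw_elt q A B C by apply: id1 => //; exact: c2.
have e2 : aw_elt q C' B A = aw_elt q C A B by apply: id2.
have e3 : aw_elt q B A C' = aw_elt q B C A by apply: id3 => //; exact: c1.
have srel : aw_relations q B A C'.
  rewrite /aw_relations /commutes_with_gens e1 e2 e3.
  split; [|split]; split=> //; split=> //; apply: comm_C' => //.
have [sigma [sA sB sC _]] := huniv D B A C' srel.
have r3 : forall x, rho (rho (rho x)) = x.
  by apply: (uid (rho \o rho \o rho)); rewrite /comp /= !(rA, rB, rC).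
have s2 : forall x, sigma (sigma x) = x.
  apply: (uid (sigma \o sigma)); rewrite /comp /= ?sA ?sB //.
  have fD : forall v w, sigma (v + w) = sigma v + sigma w by move=> v w; exact: rmorphD.
  have fB : forall v w, sigma (v - w) = sigma v - sigma w by move=> v w; exact: rmorphB.
  have fM : forall v w, sigma (v * w) = sigma v * sigma w by move=> v w; exact: rmorphM.
  rewrite sC /C' fD hSa fB !fM sA sB sC /C'.
  by rewrite -[B * A - A * B]opprB scalerN addrK.
exists rho, sigma.
split.
  split => //.
  - by exists (rho \o rho) => x /=; rewrite r3.
  - by exists sigma => x; rewrite s2.
split; first by [].
split.
  by rewrite /aw_alpha /aw_beta /aw_gamma !hSa !hS rA rB rC.
split; first by [].
by rewrite /aw_alpha /aw_beta /aw_gamma !hSa !hS sA sB sC e1 e2 e3.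
Qed.
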